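(* $hf(\mathcal{B})=\{v\}$.
   Context: A point $x$ of a space $X$ is homotopically fixed in $X$ if $h_t(x)=x$ for all $t$ for every homotopy $h_t:X\to X$ with $h_0=\mathrm{id}_X$; $hf(X)$ denotes the set of homotopically fixed points of $X$. The double broom $\mathcal{B}\subset\mathbb{R}^2$: let $v=(0,0)$, $a_0=(0,1)$, $b_0=(0,-1)$, $a_n=(1/n,0)$, $b_n=(-1/n,0)$ for $n\ge1$; let $J_{a_0}=[v,a_0]$, $J_{b_0}=[v,b_0]$, $J_{a_n}=[a_n,a_0]$, $J_{b_n}=[b_n,b_0]$ (straight segments), $A=J_{a_0}\cup\bigcup_{n\ge1}J_{a_n}$, $B=J_{b_0}\cup\bigcup_{n\ge1}J_{b_n}$, and $\mathcal{B}=A\cup B$. *)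

(* Defs.v *)
From Stdlib Require Import Reals.
Open Scope R_scope.

Definition pt : Type := (R * R)%type.

Definition dist2 (p q : pt) : R :=
  sqrt ((fst p - fst q)^2 + (snd p - snd q)^2).

Definition segment (p q : pt) (z : pt) : Prop :=
  exists s : R, 0 <= s <= 1 /\
    z = (fst p + s * (fst q - fst p), snd p + s * (snd q - snd p)).

Definition v_pt : pt := (0, 0).
Definition a0 : pt := (0, 1).
Definition b0 : pt := (0, -1).
Definition a_n (n : nat) : pt := (/ INR n, 0).
Definition b_n (n : nat) : pt := (- / INR n, 0).

Definition broomA (z : pt) : Prop :=
  segment v_pt a0 z \/ exists n : nat, (1 <= n)%nat /\ segment (a_n n) a0 z.
Definition broomB (z : pt) : Prop :=
  segment v_pt b0 z \/ exists n : nat, (1 <= n)%nat /\ segment (b_n n) b0 z.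

Definition double_broom (z : pt) : Prop := broomA z \/ broomB z.

Definition homotopy_from_id (X : pt -> Prop) (h : R -> pt -> pt) : Prop :=
  (forall t x, 0 <= t <= 1 -> X x -> X (h t x)) /\
  (forall x, X x -> h 0 x = x) /\
  (forall t x, 0 <= t <= 1 -> X x ->
     forall eps, 0 < eps -> exists delta, 0 < delta /\
       forall t' x', 0 <= t' <= 1 -> X x' ->
         Rabs (t' - t) < delta -> dist2 x' x < delta ->
         dist2 (h t' x') (h t x) < eps).

Definition homotopically_fixed (X : pt -> Prop) (x : pt) : Prop :=
  X x /\ forall h, homotopy_from_id X h -> forall t, 0 <= t <= 1 -> h t x = x.

(* Main.v *)
Require Import Defs.
From Stdlib Require Import Reals Lra Lia Classical.
Open Scope R_scope.

Lemma pow2_abs a : a ^ 2 = Rabs a ^ 2.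
Proof. rewrite <- (pow2_abs a). reflexivity. Qed.

Lemma dist_x p q : Rabs (fst p - fst q) <= dist2 p q.
Proof.
  unfold dist2. rewrite <- (sqrt_pow2 (Rabs (fst p - fst q))) by apply Rabs_pos.
  apply sqrt_le_1_alt. rewrite <- pow2_abs. pose proof (pow2_ge_0 (snd p - snd q)). lra.
Qed.

Lemma dist_y p q : Rabs (snd p - snd q) <= dist2 p q.
Proof.
  unfold dist2. rewrite <- (sqrt_pow2 (Rabs (snd p - snd q))) by apply Rabs_pos.
  apply sqrt_le_1_alt. rewrite <- pow2_abs. pose proof (pow2_ge_0 (fst p - fst q)). lra.
Qed.

Lemma dist_le p q : dist2 p q <= Rabs (fst p - fst q) + Rabs (snd p - snd q).
Proof.
  unfold dist2.
  pose proof (Rabs_pos (fst p - fst q)). pose proof (Rabs_pos (snd p - snd q)).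
  rewrite <- (sqrt_pow2 (Rabs (fst p - fst q) + Rabs (snd p - snd q))) by lra.
  apply sqrt_le_1_alt. rewrite (pow2_abs (fst p - fst q)), (pow2_abs (snd p - snd q)).
  nra.
Qed.

Lemma dist_self p : dist2 p p = 0.
Proof. unfold dist2. replace ((fst p - fst p) ^ 2 + (snd p - snd p) ^ 2) with 0 by ring.
  apply sqrt_0. Qed.

Lemma dist_comp p q e : Rabs (fst p - fst q) < e/2 -> Rabs (snd p - snd q) < e/2 -> dist2 p q < e.
Proof. intros. pose proof (dist_le p q). lra. Qed.

Lemma real_ind (P : R -> Prop) :
  (forall s, 0<=s<=1 -> (forall s', 0<=s'<s -> P s') ->
     exists eta, 0<eta /\ forall s'', s<=s''<s+eta -> s''<=1 -> P s'') ->
  forall s, 0<=s<=1 -> P s.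
Proof.
  intros H.
  set (E := fun u => 0<=u<=1 /\ forall w, 0<=w<=u -> P w).
  destruct (H 0 ltac:(lra)) as [e0 [He0 Hp0]]. { intros; lra. }
  assert (E0 : E 0). { split. lra. intros w Hw. apply Hp0; lra. }
  assert (Hb : bound E). { exists 1. intros u [Hu _]. lra. }
  destruct (completeness E Hb (ex_intro _ 0 E0)) as [m [Hub Hlub]].
  assert (Hm0 : 0 <= m) by (apply Hub; exact E0).
  assert (Hm1 : m <= 1). { apply Hlub. intros u [Hu _]. lra. }
  assert (A : forall u, 0<=u<m -> P u).
  { intros u Hu. destruct (classic (exists e, E e /\ u < e)) as [[e [[He1 He2] He3]]|Hn].
    - apply He2; lra.
    - exfalso. assert (m <= u). { apply Hlub. intros e Ee. destruct (Rle_dec e u); auto.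
        exfalso. apply Hn. exists e. split; auto. lra. } lra. }
  destruct (H m ltac:(lra) A) as [eta [Heta Hp]].
  set (m' := Rmin (m + eta/2) 1).
  assert (Em' : E m').
  { unfold m'. split. split. apply Rmin_glb; lra. apply Rmin_r.
    intros w Hw. pose proof (Rmin_l (m+eta/2) 1). pose proof (Rmin_r (m+eta/2) 1).
    destruct (Rlt_le_dec w m). apply A; lra. apply Hp; lra. }
  assert (m' <= m) by (apply Hub; exact Em').
  assert (m' = 1). { unfold m' in *. destruct (Rle_dec (m+eta/2) 1).
    rewrite Rmin_left in H0; lra. rewrite Rmin_right in *; lra. }
  intros s Hs. destruct Em' as [_ Hw]. apply Hw. lra.
Qed.

Definition Kc (c : R) := c = 0 \/ exists n, (1<=n)%nat /\ c = / INR n.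
Definition bchar (z : pt) := exists c s, Kc c /\ 0<=s<=1 /\
   (z = ((1-s)*c, s) \/ z = (-((1-s)*c), -s)).

Lemma INR_ge1 n : (1<=n)%nat -> 1 <= INR n.
Proof. intros. apply (le_INR 1 n) in H. simpl in H. exact H. Qed.

Lemma Kc_bounds c : Kc c -> 0 <= c <= 1.
Proof. intros [->|[n [Hn ->]]]. lra. pose proof (INR_ge1 n Hn).
  split. left. apply Rinv_0_lt_compat; lra. rewrite <- Rinv_1. apply Rinv_le_contravar; lra. Qed.

Lemma broom_char z : double_broom z <-> bchar z.
Proof.
  split.
  - intros [[H|H]|[H|H]];
    [destruct H as [s [Hs ->]] | destruct H as [n [Hn [s [Hs ->]]]] |
     destruct H as [s [Hs ->]] | destruct H as [n [Hn [s [Hs ->]]]]]; unfold v_pt, a0, b0, a_n, b_n; simpl.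
    + exists 0, s. repeat split; try lra. left; auto. left. f_equal; ring.
    + exists (/ INR n), s. repeat split; try lra. right; eauto. left. f_equal; ring.
    + exists 0, s. repeat split; try lra. left; auto. right. f_equal; ring.
    + exists (/ INR n), s. repeat split; try lra. right; eauto. right. f_equal; ring.
  - intros [c [s [[->|[n [Hn ->]]] [Hs [->| ->]]]]]; unfold double_broom, broomA, broomB.
    + left; left. exists s. split; auto. unfold v_pt, a0; simpl. f_equal; ring.
    + right; left. exists s. split; auto. unfold v_pt, b0; simpl. f_equal; ring.
    + left; right. exists n. split; auto. exists s. split; auto. unfold a_n, a0; simpl. f_equal; ring.
    + right; right. exists n. split; auto. exists s. split; auto. unfold b_n, b0; simpl. f_equal; ring.
Qed.

Definition negp (z : pt) : pt := (- fst z, - snd z).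

Lemma bchar_neg z : bchar z -> bchar (negp z).
Proof.
  intros [c [s [Hc [Hs [-> | ->]]]]]; exists c, s; (split; [auto|split; [auto|]]); unfold negp; simpl.
  right; reflexivity. left. f_equal; ring.
Qed.

Lemma dist_neg p q : dist2 (negp p) (negp q) = dist2 p q.
Proof. unfold dist2, negp; simpl. f_equal. ring. Qed.

Lemma Ksep c n : Kc c -> (1<=n)%nat -> c <> / INR n -> Rabs (c - / INR n) >= (/ INR n)^2 / 2.
Proof.
  intros Hc Hn Hne. pose proof (INR_ge1 n Hn) as HN. set (N := INR n) in *.
  assert (HiN : 0 < / N) by (apply Rinv_0_lt_compat; lra).
  assert (HiN1 : / N <= 1) by (rewrite <- Rinv_1; apply Rinv_le_contravar; lra).
  destruct Hc as [->|[m [Hm ->]]].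
  - rewrite Rabs_left by lra. nra.
  - pose proof (INR_ge1 m Hm) as HM.
    destruct (Nat.lt_total m n) as [Hlt|[Heq|Hgt]].
    + assert (INR m <= N - 1). { unfold N. 
        assert (INR (S m) <= INR n) by (apply le_INR; lia). rewrite S_INR in H. lra. }
      assert (/ INR m >= / (N-1)). { apply Rle_ge, Rinv_le_contravar; lra. }
      assert (/ (N-1) - / N = / (N*(N-1))) by (field; lra).
      assert (/ (N*(N-1)) >= / (N*N)). { apply Rle_ge, Rinv_le_contravar; nra. }
      assert (/ (N*N) = (/N)^2) by (field; lra).
      pose proof (pow2_ge_0 (/N)). rewrite Rabs_right by lra. lra.
    + subst. exfalso; apply Hne; reflexivity.
    + assert (INR m >= N + 1). { unfold N.
        assert (INR m >= INR (S n)) by (apply Rle_ge, le_INR; lia). rewrite S_INR in H. lra. }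
      assert (/ INR m <= / (N+1)). { apply Rinv_le_contravar; lra. }
      assert (/ N - / (N+1) = / (N*(N+1))) by (field; lra).
      assert (/ (N*(N+1)) >= / (N*N) / 2). { 
        assert (/ (N*N) / 2 = / (2*N*N)) by (field; lra). rewrite H2.
        apply Rle_ge, Rinv_le_contravar; nra. }
      assert (/ (N*N) = (/N)^2) by (field; lra).
      pose proof (pow2_ge_0 (/N)). rewrite Rabs_left1 by lra. lra.
Qed.

Lemma isolB n sg w : (1<=n)%nat -> 0 <= sg <= 1/4 -> bchar w ->
  Rabs (fst w - (-((1-sg) * / INR n))) < (/ INR n)^2/8 ->
  Rabs (snd w - (- sg)) < (/ INR n)^2/8 ->
  exists s', 0 <= s' <= 1 /\ w = (-((1-s') * / INR n), - s').
Proof.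
  intros Hn Hsg [c [s [Hc [Hs Hw]]]] Hx Hy.
  pose proof (INR_ge1 n Hn) as HN. set (c0 := / INR n) in *.
  assert (Hc0 : 0 < c0) by (apply Rinv_0_lt_compat; lra).
  assert (Hc01 : c0 <= 1) by (unfold c0; rewrite <- Rinv_1; apply Rinv_le_contravar; lra).
  pose proof (Kc_bounds c Hc) as Hcb.
  destruct Hw as [->| ->]; simpl in *.
  - exfalso. assert (0 <= (1-s)*c) by nra.
    rewrite Rabs_right in Hx by nra. nra.
  - destruct (Req_dec c c0) as [->|Hne].
    + exists s; auto.
    + exfalso. pose proof (Ksep c n Hc Hn Hne) as Hs'. fold c0 in Hs'.
      assert (E : - ((1 - s) * c) - - ((1 - sg) * c0) = (1-sg)*(c0 - c) + (s - sg) * c) by ring.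
      rewrite E in Hx.
      assert (Rabs ((s - sg) * c) <= Rabs (s - sg)).
      { rewrite Rabs_mult. rewrite (Rabs_right c) by lra. 
        pose proof (Rabs_pos (s-sg)). nra. }
      assert (Rabs (s - sg) < c0^2/8). { replace (s - sg) with (-(-s - - sg)) by ring. rewrite Rabs_Ropp. exact Hy. }
      assert (Rabs ((1-sg)*(c0-c)) >= 3/4 * (c0^2/2)).
      { rewrite Rabs_mult, (Rabs_right (1-sg)) by lra. 
        replace (c0 - c) with (- (c - c0)) by ring. rewrite Rabs_Ropp. nra. }
      pose proof (Rabs_triang_inv ((1 - sg) * (c0 - c)) (- ((s - sg) * c))) as T.
      replace ((1 - sg) * (c0 - c) - - ((s - sg) * c)) with ((1 - sg) * (c0 - c) + (s - sg) * c) in T by ring.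
      rewrite Rabs_Ropp in T. nra.
Qed.

Notation B := double_broom.

Lemma B_v : B v_pt.
Proof. apply broom_char. exists 0, 0. split. left; auto. split. lra. left. unfold v_pt. f_equal; ring. Qed.

Lemma close_of_dist p q e : dist2 p q < e -> Rabs (fst p - fst q) < e /\ Rabs (snd p - snd q) < e.
Proof. intros. pose proof (dist_x p q). pose proof (dist_y p q). lra. Qed.

Lemma abs_tri a b c e1 e2 : Rabs (a - c) < e1 -> Rabs (b - c) < e2 -> Rabs (a - b) < e1 + e2.
Proof. intros. replace (a - b) with ((a - c) + - (b - c)) by ring.
  eapply Rle_lt_trans. apply Rabs_triang. rewrite Rabs_Ropp. lra. Qed.

Lemma tube h : homotopy_from_id B h -> forall e, 0 < e -> exists d, 0 < d /\
  forall s z, 0 <= s <= 1 -> B z -> dist2 z v_pt < d ->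
    Rabs (fst (h s z) - fst (h s v_pt)) < e /\ Rabs (snd (h s z) - snd (h s v_pt)) < e.
Proof.
  intros [H1 [H2 H3]] e He.
  set (P := fun s => exists d, 0 < d /\ forall s' z, 0 <= s' <= s -> B z -> dist2 z v_pt < d ->
    Rabs (fst (h s' z) - fst (h s' v_pt)) < e /\ Rabs (snd (h s' z) - snd (h s' v_pt)) < e).
  assert (HP : forall s, 0 <= s <= 1 -> P s).
  { apply real_ind. intros s Hs IH.
    destruct (H3 s v_pt Hs B_v (e/2) ltac:(lra)) as [ds [Hds Hc]].
    assert (C : forall s' z, 0 <= s' <= 1 -> Rabs (s' - s) < ds -> B z -> dist2 z v_pt < ds ->
       Rabs (fst (h s' z) - fst (h s' v_pt)) < e /\ Rabs (snd (h s' z) - snd (h s' v_pt)) < e).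
    { intros s' z Hs' Hss Hz Hzd.
      assert (Hvv : dist2 v_pt v_pt < ds) by (rewrite dist_self; lra).
      destruct (close_of_dist _ _ _ (Hc s' z Hs' Hz Hss Hzd)) as [A1 A2].
      destruct (close_of_dist _ _ _ (Hc s' v_pt Hs' B_v Hss Hvv)) as [A3 A4].
      split; replace e with (e/2+e/2) by field; eapply abs_tri; eauto. }
    destruct (Req_dec s 0) as [Hs0|Hs0].
    - exists (ds/2). split. lra. intros s'' Hs'' Hs''1. exists ds. split. lra.
      intros s' z Hs' Hz Hzd. apply C; [lra| |exact Hz|exact Hzd]. apply Rabs_def1; lra.
    - set (s0 := Rmax 0 (s - ds/2)).
      assert (Hs0a : 0 <= s0 < s). { unfold s0. split. apply Rmax_l.
        apply Rmax_lub_lt; lra. }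
      destruct (IH s0 Hs0a) as [d0 [Hd0 Hd0']].
      exists (ds/2). split. lra. intros s'' Hs'' Hs''1. exists (Rmin d0 ds). split.
      apply Rmin_glb_lt; lra.
      intros s' z Hs' Hz Hzd. pose proof (Rmin_l d0 ds). pose proof (Rmin_r d0 ds).
      destruct (Rle_dec s' s0) as [Hle|Hgt].
      + apply Hd0'; [lra|exact Hz|lra].
      + pose proof (Rmax_r 0 (s - ds/2)). fold s0 in H4.
        apply C; [lra| |exact Hz|lra]. apply Rabs_def1; lra. }
  destruct (HP 1 ltac:(lra)) as [d [Hd Hd']]. exists d. split; [exact Hd|].
  intros s z Hs Hz Hzd. apply Hd'; auto; lra.
Qed.

Lemma zero_of_small x k : 0 < k -> (forall e, 0 < e <= 1/8 -> Rabs x < k * e) -> x = 0.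
Proof.
  intros Hk H. destruct (Req_dec x 0) as [|Hx]; auto. exfalso.
  assert (Hax : 0 < Rabs x) by (apply Rabs_pos_lt; auto).
  set (e := Rmin (1/8) (Rabs x / k)).
  assert (0 < e) by (apply Rmin_glb_lt; [lra| apply Rdiv_lt_0_compat; lra]).
  assert (e <= 1/8) by apply Rmin_l.
  assert (e <= Rabs x / k) by apply Rmin_r.
  specialize (H e ltac:(lra)).
  assert (k * e <= Rabs x). { apply Rmult_le_reg_l with (/k). apply Rinv_0_lt_compat; lra.
    rewrite <- Rmult_assoc, Rinv_l by lra. unfold Rdiv in H2. lra. }
  lra.
Qed.

Lemma v_fixed h : homotopy_from_id B h -> forall t, 0<=t<=1 -> h t v_pt = v_pt.
Proof.
  intros Hh t Ht.
  assert (K : forall e, 0 < e <= 1/8 ->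
     Rabs (fst (h t v_pt)) < 2*e /\ Rabs (snd (h t v_pt)) < 3*e).
  { intros e He. destruct (tube h Hh e ltac:(lra)) as [d [Hd Htube]].
    destruct (archimed_cor1 (Rmin d e)) as [n [Hn Hn0]]. apply Rmin_glb_lt; lra.
    assert (Hn1 : (1 <= n)%nat) by lia.
    pose proof (INR_ge1 n Hn1) as HN.
    set (c0 := / INR n) in *.
    assert (Hc0 : 0 < c0) by (unfold c0; apply Rinv_0_lt_compat; lra).
    pose proof (Rmin_l d e); pose proof (Rmin_r d e).
    set (a := (c0, 0)). set (b := (-c0, 0)).
    assert (Kc0 : Kc c0) by (right; exists n; auto).
    assert (Ba : B a). { apply broom_char. exists c0, 0. split. auto. split. lra. left. unfold a. f_equal; ring. }
    assert (Bb : B b). { apply broom_char. exists c0, 0. split. auto. split. lra. right. unfold b. f_equal; ring. }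
    assert (da : dist2 a v_pt < d). { eapply Rle_lt_trans. apply dist_le. unfold a, v_pt; simpl.
       replace (c0 - 0) with c0 by ring. replace (0 - 0) with 0 by ring. rewrite Rabs_R0, Rabs_right; lra. }
    assert (db : dist2 b v_pt < d). { eapply Rle_lt_trans. apply dist_le. unfold b, v_pt; simpl.
       replace (-c0 - 0) with (-c0) by ring. replace (0 - 0) with 0 by ring. rewrite Rabs_R0, Rabs_Ropp, Rabs_right; lra. }
    pose proof Hh as [H1 [H2 H3]].
    set (r := c0^2/8).
    assert (Hr : 0 < r) by (unfold r; nra).
    set (P := fun s => (exists sg, 0<=sg<=1 /\ h s b = (-((1-sg)*c0), -sg)) /\
                       (exists sg, 0<=sg<=1 /\ h s a = ((1-sg)*c0, sg))).
    assert (F : forall s sb sa, 0<=s<=1 -> 0<=sb -> 0 <= sa -> h s b = (-((1-sb)*c0), -sb) ->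
               h s a = ((1-sa)*c0, sa) -> sb + sa < 2*e).
    { intros s sb sa Hs Hsb Hsa Eb Ea.
      destruct (Htube s b Hs Bb db) as [_ Tb]. destruct (Htube s a Hs Ba da) as [_ Ta].
      rewrite Eb in Tb; rewrite Ea in Ta; simpl in *.
      pose proof (abs_tri _ _ _ _ _ Tb Ta) as T. apply Rabs_def2 in T. lra. }
    assert (HP : forall s, 0<=s<=1 -> P s).
    { apply real_ind. intros s Hs IH.
      destruct (H3 s b Hs Bb (r/2) ltac:(lra)) as [eb [Heb Hcb]].
      destruct (H3 s a Hs Ba (r/2) ltac:(lra)) as [ea [Hea Hca]].
      pose proof (Rmin_l eb ea); pose proof (Rmin_r eb ea).
      set (eta := Rmin eb ea) in *.
      assert (Heta : 0 < eta) by (apply Rmin_glb_lt; lra).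
      assert (Base : exists s0, 0<=s0<=1 /\ Rabs (s0 - s) < eta /\ P s0).
      { destruct (Req_dec s 0) as [Hs0|Hs0].
        - exists 0. split. lra. split. rewrite Hs0. replace (0-0) with 0 by ring. rewrite Rabs_R0; lra.
          split.
          + exists 0. split. lra. rewrite (H2 b Bb). unfold b. f_equal; ring.
          + exists 0. split. lra. rewrite (H2 a Ba). unfold a. f_equal; ring.
        - pose proof (Rmax_l 0 (s - eta/2)). pose proof (Rmax_r 0 (s - eta/2)). set (s0 := Rmax 0 (s - eta/2)) in *.
          assert (Hs0a : 0 <= s0 < s). { unfold s0. split. apply Rmax_l. apply Rmax_lub_lt; lra. }
          exists s0. split. lra. split. apply Rabs_def1; lra. apply IH; lra. }
      destruct Base as [s0 [Hs0 [Hs0s [[sb [Hsb Eb]] [sa [Hsa Ea]]]]]].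
      pose proof (F s0 sb sa Hs0 ltac:(lra) ltac:(lra) Eb Ea) as Fs.
      exists eta. split. exact Heta. intros s'' Hs'' Hs''1.
      assert (Hs''s : Rabs (s'' - s) < eta) by (apply Rabs_def1; lra).
      assert (Hbb : dist2 b b < eb) by (rewrite dist_self; lra).
      assert (Haa : dist2 a a < ea) by (rewrite dist_self; lra).
      destruct (close_of_dist _ _ _ (Hcb s'' b ltac:(lra) Bb ltac:(lra) Hbb)) as [B1 B2].
      destruct (close_of_dist _ _ _ (Hcb s0 b Hs0 Bb ltac:(lra) Hbb)) as [B3 B4].
      destruct (close_of_dist _ _ _ (Hca s'' a ltac:(lra) Ba ltac:(lra) Haa)) as [A1 A2].
      destruct (close_of_dist _ _ _ (Hca s0 a Hs0 Ba ltac:(lra) Haa)) as [A3 A4].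
      rewrite Eb in B3, B4. rewrite Ea in A3, A4. simpl in B3, B4, A3, A4.
      split.
      - apply (isolB n sb (h s'' b) Hn1 ltac:(lra)).
        + apply broom_char. apply H1. lra. exact Bb.
        + fold c0. replace (c0^2/8) with (r/2 + r/2) by (unfold r; field). eapply abs_tri; eauto.
        + fold c0. replace (c0^2/8) with (r/2 + r/2) by (unfold r; field). eapply abs_tri; eauto.
      - destruct (isolB n sa (negp (h s'' a)) Hn1 ltac:(lra)) as [s' [Hs' Es']].
        + apply bchar_neg. apply broom_char. apply H1. lra. exact Ba.
        + fold c0. replace (c0^2/8) with (r/2 + r/2) by (unfold r; field). unfold negp; simpl.
          replace (- fst (h s'' a) - - ((1 - sa) * c0)) with (- (fst (h s'' a) - (1 - sa) * c0)) by ring.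
          rewrite Rabs_Ropp. eapply abs_tri; eauto.
        + fold c0. replace (c0^2/8) with (r/2 + r/2) by (unfold r; field). unfold negp; simpl.
          replace (- snd (h s'' a) - - sa) with (- (snd (h s'' a) - sa)) by ring.
          rewrite Rabs_Ropp. eapply abs_tri; eauto.
        + exists s'. split. exact Hs'. fold c0 in Es'. destruct (h s'' a) as [p1 p2].
          unfold negp in Es'; simpl in Es'. injection Es' as E1 E2. f_equal; lra. }
    destruct (HP t Ht) as [[sb [Hsb Eb]] [sa [Hsa Ea]]].
    pose proof (F t sb sa Ht ltac:(lra) ltac:(lra) Eb Ea) as Fs.
    destruct (Htube t b Ht Bb db) as [T1 T2]. rewrite Eb in T1, T2. simpl in T1, T2.
    apply Rabs_def2 in T1. apply Rabs_def2 in T2.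
    assert (0 <= (1-sb)*c0 <= c0) by nra.
    split; apply Rabs_def1; lra. }
  destruct (h t v_pt) as [g1 g2] eqn:Eg. unfold v_pt. f_equal.
  - apply (zero_of_small g1 2). lra. intros e He. apply (proj1 (K e He)).
  - apply (zero_of_small g2 3). lra. intros e He. apply (proj2 (K e He)).
Qed.

Definition ctn (f : R -> R -> R -> R) t x y := forall e, 0 < e -> exists d, 0 < d /\
  forall t' x' y', Rabs (t' - t) < d -> Rabs (x' - x) < d -> Rabs (y' - y) < d ->
    Rabs (f t' x' y' - f t x y) < e.

Lemma ctn_const c t x y : ctn (fun _ _ _ => c) t x y.
Proof. intros e He. exists 1. split. lra. intros. replace (c - c) with 0 by ring. rewrite Rabs_R0; lra. Qed.
Lemma ctn_t t x y : ctn (fun t _ _ => t) t x y.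
Proof. intros e He. exists e. split. lra. intros; auto. Qed.
Lemma ctn_x t x y : ctn (fun _ x _ => x) t x y.
Proof. intros e He. exists e. split. lra. intros; auto. Qed.
Lemma ctn_y t x y : ctn (fun _ _ y => y) t x y.
Proof. intros e He. exists e. split. lra. intros; auto. Qed.

Lemma ctn_plus f g t x y : ctn f t x y -> ctn g t x y -> ctn (fun t x y => f t x y + g t x y) t x y.
Proof.
  intros Hf Hg e He. destruct (Hf (e/2) ltac:(lra)) as [d1 [Hd1 H1]]. destruct (Hg (e/2) ltac:(lra)) as [d2 [Hd2 H2]].
  exists (Rmin d1 d2). split. apply Rmin_glb_lt; lra. intros t' x' y' Ht Hx Hy.
  pose proof (Rmin_l d1 d2); pose proof (Rmin_r d1 d2).
  specialize (H1 t' x' y' ltac:(lra) ltac:(lra) ltac:(lra)). specialize (H2 t' x' y' ltac:(lra) ltac:(lra) ltac:(lra)).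
  replace (f t' x' y' + g t' x' y' - (f t x y + g t x y)) with ((f t' x' y' - f t x y) + (g t' x' y' - g t x y)) by ring.
  eapply Rle_lt_trans. apply Rabs_triang. lra.
Qed.

Lemma ctn_opp f t x y : ctn f t x y -> ctn (fun t x y => - f t x y) t x y.
Proof. intros Hf e He. destruct (Hf e He) as [d [Hd H]]. exists d. split; auto. intros.
  replace (- f t' x' y' - - f t x y) with (- (f t' x' y' - f t x y)) by ring. rewrite Rabs_Ropp; auto. Qed.

Lemma ctn_minus f g t x y : ctn f t x y -> ctn g t x y -> ctn (fun t x y => f t x y - g t x y) t x y.
Proof. intros Hf Hg. unfold Rminus. apply (ctn_plus f (fun t x y => - g t x y)); auto. apply ctn_opp; auto. Qed.

Lemma ctn_mult f g t x y : ctn f t x y -> ctn g t x y -> ctn (fun t x y => f t x y * g t x y) t x y.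
Proof.
  intros Hf Hg e He. set (f0 := f t x y). set (g0 := g t x y).
  pose proof (Rabs_pos f0). pose proof (Rabs_pos g0).
  set (e1 := Rmin 1 (e / (1 + Rabs f0 + Rabs g0))).
  assert (He1 : 0 < e1) by (apply Rmin_glb_lt; [lra| apply Rdiv_lt_0_compat; lra]).
  assert (He11 : e1 <= 1) by apply Rmin_l.
  assert (He12 : e1 * (1 + Rabs f0 + Rabs g0) <= e).
  { assert (e1 <= e / (1 + Rabs f0 + Rabs g0)) by apply Rmin_r.
    apply Rmult_le_compat_r with (r := 1 + Rabs f0 + Rabs g0) in H1; [|lra].
    unfold Rdiv in H1. rewrite Rmult_assoc, Rinv_l in H1 by lra. lra. }
  destruct (Hf e1 He1) as [d1 [Hd1 H1]]. destruct (Hg e1 He1) as [d2 [Hd2 H2]].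
  exists (Rmin d1 d2). split. apply Rmin_glb_lt; lra. intros t' x' y' Ht Hx Hy.
  pose proof (Rmin_l d1 d2); pose proof (Rmin_r d1 d2).
  specialize (H1 t' x' y' ltac:(lra) ltac:(lra) ltac:(lra)). specialize (H2 t' x' y' ltac:(lra) ltac:(lra) ltac:(lra)).
  fold f0 in H1. fold g0 in H2.
  set (a := f t' x' y' - f0) in *. set (b := g t' x' y' - g0) in *.
  replace (f t' x' y' * g t' x' y' - f0 * g0) with (a * b + f0 * b + a * g0) by (unfold a, b; ring).
  assert (Rabs (a * b + f0 * b + a * g0) <= Rabs a * Rabs b + Rabs f0 * Rabs b + Rabs a * Rabs g0).
  { eapply Rle_trans. apply Rabs_triang. rewrite !Rabs_mult.
    pose proof (Rabs_triang (a*b) (f0*b)). rewrite !Rabs_mult in H5. lra. }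
  pose proof (Rabs_pos a). pose proof (Rabs_pos b).
  assert (Rabs a * Rabs b < e1 * e1) by nra.
  assert (Rabs f0 * Rabs b <= Rabs f0 * e1) by nra.
  assert (Rabs a * Rabs g0 <= e1 * Rabs g0) by nra.
  nra.
Qed.

Lemma ctn_comp (phi : R -> R) f t x y : continuity_pt phi (f t x y) -> ctn f t x y ->
  ctn (fun t x y => phi (f t x y)) t x y.
Proof.
  intros Hp Hf e He.
  unfold continuity_pt, continue_in, limit1_in, limit_in in Hp. simpl in Hp.
  destruct (Hp e He) as [alp [Halp Hp']].
  destruct (Hf alp Halp) as [d [Hd Hd']]. exists d. split; auto.
  intros t' x' y' Ht Hx Hy.
  destruct (Req_dec (f t' x' y') (f t x y)) as [E|N].
  - rewrite E. replace (phi (f t x y) - phi (f t x y)) with 0 by ring. rewrite Rabs_R0; lra.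
  - apply Hp'. split. split. exact I. auto. unfold R_dist. apply Hd'; auto.
Qed.

Lemma ctn_abs f t x y : ctn f t x y -> ctn (fun t x y => Rabs (f t x y)) t x y.
Proof. intros. apply (ctn_comp Rabs); auto. apply Rcontinuity_abs. Qed.

Lemma ctn_inv f t x y : f t x y <> 0 -> ctn f t x y -> ctn (fun t x y => / f t x y) t x y.
Proof. intros Hn Hf. apply (ctn_comp (inv_fct id) f t x y); auto.
  apply continuity_pt_inv; auto. apply derivable_continuous_pt, derivable_pt_id. Qed.

Ltac ctn_auto := repeat first [ apply ctn_mult | apply ctn_plus | apply ctn_minus | apply ctn_opp
  | apply ctn_abs | apply ctn_t | apply ctn_x | apply ctn_y | apply ctn_const ].

Definition ctnB (f : R -> R -> R -> R) t x y := forall e, 0 < e -> exists d, 0 < d /\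
  forall t' x' y', 0 <= t' <= 1 -> B (x', y') -> Rabs (t' - t) < d -> Rabs (x' - x) < d -> Rabs (y' - y) < d ->
    Rabs (f t' x' y' - f t x y) < e.

Lemma ctn_ctnB f t x y : ctn f t x y -> ctnB f t x y.
Proof. intros H e He. destruct (H e He) as [d [Hd H']]. exists d. split; auto. Qed.

Definition mkh (F G : R -> R -> R -> R) (t : R) (z : pt) : pt := (F t (fst z) (snd z), G t (fst z) (snd z)).

Lemma homotopy_of F G :
  (forall t z, 0<=t<=1 -> B z -> B (mkh F G t z)) ->
  (forall z, B z -> mkh F G 0 z = z) ->
  (forall t z, 0<=t<=1 -> B z -> ctnB F t (fst z) (snd z) /\ ctnB G t (fst z) (snd z)) ->
  homotopy_from_id B (mkh F G).
Proof.
  intros H1 H2 H3. split; [|split]; auto.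
  intros t z Ht Hz e He. destruct (H3 t z Ht Hz) as [HF HG].
  destruct (HF (e/2) ltac:(lra)) as [d1 [Hd1 D1]]. destruct (HG (e/2) ltac:(lra)) as [d2 [Hd2 D2]].
  exists (Rmin d1 d2). split. apply Rmin_glb_lt; lra.
  intros t' z' Ht' Hz' Htt Hzz. pose proof (Rmin_l d1 d2); pose proof (Rmin_r d1 d2).
  pose proof (dist_x z' z). pose proof (dist_y z' z).
  destruct z' as [x' y']. unfold mkh. apply dist_comp; simpl.
  - apply D1; auto; simpl in *; lra.
  - apply D2; auto; simpl in *; lra.
Qed.

Lemma negp_negp z : negp (negp z) = z.
Proof. destruct z; unfold negp; simpl; f_equal; ring. Qed.

Lemma B_neg z : B z -> B (negp z).
Proof. intros H. apply broom_char. apply bchar_neg. apply broom_char; auto. Qed.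

Lemma homotopy_neg h : homotopy_from_id B h -> homotopy_from_id B (fun t z => negp (h t (negp z))).
Proof.
  intros [H1 [H2 H3]]. split; [|split].
  - intros. apply B_neg, H1; auto. apply B_neg; auto.
  - intros. rewrite H2. apply negp_negp. apply B_neg; auto.
  - intros t z Ht Hz e He. destruct (H3 t (negp z) Ht (B_neg z Hz) e He) as [d [Hd H]].
    exists d. split; auto. intros t' z' Ht' Hz' Htt Hzz. rewrite dist_neg. apply H; auto.
    apply B_neg; auto. rewrite dist_neg; auto.
Qed.

Definition F1 (t x y : R) := x * (1 - t * Rabs x * / 2).
Definition G1 (t x y : R) := y + t * (1 - Rabs y) * x * / 2.

Lemma H1_hom : homotopy_from_id B (mkh F1 G1).
Proof.
  apply homotopy_of.
  - intros t z Ht Hz. apply broom_char. apply broom_char in Hz.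
    destruct Hz as [c [s [Hc [Hs [-> | ->]]]]]; pose proof (Kc_bounds c Hc); unfold mkh, F1, G1; simpl.
    + rewrite (Rabs_right ((1-s)*c)) by nra. rewrite (Rabs_right s) by lra.
      exists c, (s + t*(1-s)*((1-s)*c)*/2). split; auto. split.
      * assert (0 <= t*(1-s)*((1-s)*c)) by (repeat apply Rmult_le_pos; lra). split. lra.
        assert ((1-s)*c*t <= 1) by (assert ((1-s)*c <= 1) by nra; nra). nra.
      * left. f_equal; field.
    + rewrite Rabs_Ropp, (Rabs_right ((1-s)*c)) by nra. rewrite Rabs_Ropp, (Rabs_right s) by lra.
      exists c, (s + t*(1-s)*((1-s)*c)*/2). split; auto. split.
      * assert (0 <= t*(1-s)*((1-s)*c)) by (repeat apply Rmult_le_pos; lra). split. lra.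
        assert ((1-s)*c*t <= 1) by (assert ((1-s)*c <= 1) by nra; nra). nra.
      * right. f_equal; field.
  - intros [x y] _. unfold mkh, F1, G1; simpl. f_equal; ring.
  - intros t z _ _. split; apply ctn_ctnB; unfold F1, G1; ctn_auto.
Qed.

Lemma F1_move x y : x <> 0 -> Rabs x <= 1 -> F1 1 x y <> x.
Proof. intros Hx Hb E. unfold F1 in E. assert (0 < Rabs x) by (apply Rabs_pos_lt; auto).
  assert (x * Rabs x = 0) by nra. apply Rmult_integral in H0. destruct H0; [auto|lra]. Qed.

Definition W (y : R) := (y + Rabs y) * / 2.
Definition F3 (t x y : R) :=
  x * ((1 - W y * (1 + t) + Rabs (1 - W y * (1 + t))) * / 2) * / (1 - W y).
Definition G3 (t x y : R) := (y - W y) + 1 - Rabs (1 - W y * (1 + t)).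

Lemma W_pos y : 0 <= y -> W y = y.
Proof. intros. unfold W. rewrite Rabs_right by lra. field. Qed.
Lemma W_neg y : y <= 0 -> W y = 0.
Proof. intros. unfold W. rewrite Rabs_left1 by lra. field. Qed.

Lemma F3_A t c s : 0 <= t <= 1 -> 0 <= c <= 1 -> 0 <= s <= 1 ->
  (s * (1+t) <= 1 -> F3 t ((1-s)*c) s = (1 - s*(1+t)) * c /\ G3 t ((1-s)*c) s = s*(1+t)) /\
  (1 < s * (1+t) -> F3 t ((1-s)*c) s = 0 /\ G3 t ((1-s)*c) s = 2 - s*(1+t)).
Proof.
  intros Ht Hc Hs. unfold F3, G3. rewrite W_pos by lra. split; intros Hu.
  - rewrite Rabs_right by lra. destruct (Req_dec s 1) as [->|Hs1].
    + assert (t = 0) by nra. subst t. split; ring.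
    + split; [field; lra | ring].
  - rewrite Rabs_left by lra. split; ring.
Qed.

Lemma F3_B t x s : 0 <= s -> F3 t x (-s) = x /\ G3 t x (-s) = -s.
Proof. intros Hs. unfold F3, G3. rewrite W_neg by lra. rewrite Rabs_right by lra. split; field. Qed.

Lemma H3_hom : homotopy_from_id B (mkh F3 G3).
Proof.
  apply homotopy_of.
  - intros t z Ht Hz. apply broom_char. apply broom_char in Hz.
    destruct Hz as [c [s [Hc [Hs [-> | ->]]]]]; pose proof (Kc_bounds c Hc); unfold mkh; simpl.
    + destruct (F3_A t c s Ht H Hs) as [Ha Hb]. destruct (Rle_dec (s*(1+t)) 1) as [Hu|Hu].
      * destruct (Ha Hu) as [-> ->]. exists c, (s*(1+t)). split; auto. split. nra. left. f_equal; ring.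
      * destruct (Hb ltac:(lra)) as [-> ->]. exists 0, (2 - s*(1+t)). split. left; auto. split. nra.
        left. f_equal; ring.
    + destruct (F3_B t (-((1-s)*c)) s ltac:(lra)) as [-> ->]. exists c, s. split; auto.
  - intros z Hz. apply broom_char in Hz.
    destruct Hz as [c [s [Hc [Hs [-> | ->]]]]]; pose proof (Kc_bounds c Hc); unfold mkh; simpl.
    + destruct (F3_A 0 c s ltac:(lra) H Hs) as [Ha _]. destruct (Ha ltac:(lra)) as [-> ->].
      f_equal; ring.
    + destruct (F3_B 0 (-((1-s)*c)) s ltac:(lra)) as [-> ->]. reflexivity.
  - intros t [x y] Ht Hz. simpl. split.
    + destruct (Rlt_le_dec y 1) as [Hy|Hy].
      * apply ctn_ctnB. unfold F3, W. apply ctn_mult. ctn_auto.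
        apply ctn_inv. 
        { intro E. assert ((y + Rabs y) * / 2 < 1). { destruct (Rle_dec 0 y).
            rewrite Rabs_right by lra. lra. rewrite Rabs_left by lra. lra. } lra. }
        ctn_auto.
      *
        assert (Hx0 : x = 0 /\ y = 1).
        { apply broom_char in Hz. destruct Hz as [c [s [Hc [Hs [E | E]]]]]; injection E as E1 E2;
            pose proof (Kc_bounds c Hc).
          - subst. assert (s = 1) by lra. subst. split; ring.
          - lra. }
        destruct Hx0 as [-> ->].
        intros e He. exists e. split; auto. intros t' x' y' Ht' Hz' _ Hx' _.
        replace (F3 t 0 1) with 0 by (unfold F3; ring). rewrite Rminus_0_r.
        rewrite Rminus_0_r in Hx'. eapply Rle_lt_trans; [|exact Hx'].
        apply broom_char in Hz'. destruct Hz' as [c [s [Hc [Hs [E | E]]]]]; injection E as E1 E2;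
          pose proof (Kc_bounds c Hc); subst.
        -- destruct (F3_A t' c s Ht' H Hs) as [Ha Hb]. destruct (Rle_dec (s*(1+t')) 1) as [Hu|Hu].
           ++ destruct (Ha Hu) as [-> _].
              assert (0 <= s * t' * c) by (repeat apply Rmult_le_pos; lra).
              rewrite (Rabs_right ((1 - s*(1+t'))*c)) by nra. rewrite (Rabs_right ((1-s)*c)) by nra. nra.
           ++ destruct (Hb ltac:(lra)) as [-> _]. rewrite Rabs_R0. apply Rabs_pos.
        -- destruct (F3_B t' (-((1-s)*c)) s ltac:(lra)) as [-> _]. lra.
    + apply ctn_ctnB. unfold G3, W. ctn_auto.
Qed.

Lemma G3_move x y : 0 < y <= 1 -> exists t, 0 <= t <= 1 /\ G3 t x y <> y.
Proof.
  intros Hy. unfold G3. rewrite W_pos by lra. destruct (Req_dec y 1) as [->|Hy1].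
  - exists 1. split. lra. rewrite Rabs_left by lra. lra.
  - exists (1 - y). split. lra. rewrite Rabs_right by nra. nra.
Qed.

Theorem corollary3p3 :
  forall x : pt, homotopically_fixed double_broom x <-> x = v_pt.
Proof.
  intros x. split.
  - intros [Hx Hf]. destruct x as [x1 x2].
    assert (Hb : Rabs x1 <= 1 /\ -1 <= x2 <= 1).
    { apply broom_char in Hx. destruct Hx as [c [s [Hc [Hs [E | E]]]]]; injection E as E1 E2;
        pose proof (Kc_bounds c Hc); subst.
      - rewrite Rabs_right by nra. split; nra.
      - rewrite Rabs_Ropp, Rabs_right by nra. split; nra. }
    destruct (Req_dec x1 0) as [->|Hx1].
    + destruct (Rtotal_order x2 0) as [Hlt|[->|Hgt]].
      * destruct (G3_move (-0) (-x2) ltac:(lra)) as [t [Ht Hm]].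
        pose proof (Hf _ (homotopy_neg _ H3_hom) t Ht) as E.
        unfold mkh, negp in E; simpl in E. injection E as _ E2. exfalso. apply Hm. lra.
      * reflexivity.
      * destruct (G3_move 0 x2 ltac:(lra)) as [t [Ht Hm]].
        pose proof (Hf _ H3_hom t Ht) as E.
        unfold mkh in E; simpl in E. injection E as _ E2. contradiction.
    + pose proof (Hf _ H1_hom 1 ltac:(lra)) as E. unfold mkh in E; simpl in E.
      injection E as E1 _. exfalso. apply (F1_move x1 x2 Hx1 (proj1 Hb)). exact E1.
  - intros ->. split. exact B_v. intros h Hh t Ht. apply v_fixed; auto.
Qed.
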